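(* For any $\alpha,\beta\in\mathbb{R}$, the problem $\ddot y+3y+\frac32y^3=0$, $y(0)=\alpha$, $\dot y(0)=\beta$ admits a unique solution $\overline y$, which is periodic of period $$T(E)=\frac{8}{\sqrt3}\int_0^1\frac{ds}{\sqrt{(\Lambda_+(E)+\Lambda_-(E)s^2)(1-s^2)}},$$ where $E=\frac{\beta^2}{2}+\frac32\alpha^2+\frac38\alpha^4$ and $\Lambda_\pm(E)=2\sqrt{1+\frac23E}\pm2$. Moreover, the map $E\mapsto T(E)$ is strictly decreasing and $\lim_{E\to0}T(E)=2\pi/\sqrt3$. *)

(* Defs.v *)
From Stdlib Require Import Reals.
From Coquelicot Require Import Coquelicot.
Open Scope R_scope.

Definition energy (alpha beta : R) : R :=
  beta ^ 2 / 2 + 3 / 2 * alpha ^ 2 + 3 / 8 * alpha ^ 4.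

Definition Lam_plus (E : R) : R := 2 * sqrt (1 + 2 / 3 * E) + 2.
Definition Lam_minus (E : R) : R := 2 * sqrt (1 + 2 / 3 * E) - 2.

Definition period_integrand (E : R) (s : R) : R :=
  / sqrt ((Lam_plus E + Lam_minus E * s ^ 2) * (1 - s ^ 2)).

Definition Tper (E : R) : R :=
  8 / sqrt 3 * RInt_gen (period_integrand E) (at_point 0) (at_left 1).

Definition is_solution (alpha beta : R) (y : R -> R) : Prop :=
  (forall t, ex_derive y t) /\
  (forall t, is_derive (Derive y) t (- (3 * y t) - 3 / 2 * y t ^ 3)) /\
  y 0 = alpha /\ Derive y 0 = beta.

(* Main.v *)
Require Import Defs.
From Stdlib Require Import Reals Lra Psatz ClassicalEpsilon Ranalysis5.
From Coquelicot Require Import Coquelicot.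
Open Scope R_scope.

Definition Qf E x := Lam_plus E + Lam_minus E * sin x ^ 2.
Definition hh E x := / sqrt (Qf E x).

Lemma sqrt_ge1 E : 0 <= E -> 1 <= sqrt (1 + 2/3*E).
Proof. intros. rewrite <- sqrt_1 at 1. apply sqrt_le_1_alt. lra. Qed.

Lemma sqrt_sq1 E : 0 <= E -> sqrt (1 + 2/3*E) * sqrt (1 + 2/3*E) = 1 + 2/3*E.
Proof. intros. apply sqrt_sqrt. lra. Qed.

Lemma lam_facts E : 0 <= E ->
  0 <= Lam_minus E /\ Lam_plus E = Lam_minus E + 4 /\
  3/2 * Lam_minus E + 3/8 * Lam_minus E ^ 2 = E.
Proof.
  intros HE. pose proof (sqrt_ge1 E HE). pose proof (sqrt_sq1 E HE).
  unfold Lam_minus, Lam_plus. set (r := sqrt (1 + 2/3*E)) in *.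
  repeat split; nra.
Qed.

Lemma Qf_ge4 E x : 0 <= E -> 4 <= Qf E x.
Proof.
  intros HE. destruct (lam_facts E HE) as [H1 [H2 H3]]. unfold Qf.
  rewrite H2. assert (0 <= sin x ^2) by (apply pow2_ge_0). nra.
Qed.

Lemma hh_deriv E x : 0 <= E -> ex_derive (hh E) x.
Proof.
  intros HE. unfold hh, Qf. pose proof (Qf_ge4 E x HE). unfold Qf in H.
  auto_derive. split. lra. split; auto. apply Rgt_not_eq. apply sqrt_lt_R0. lra.
Qed.

Lemma pi_cont E s : 0 <= E -> -1 < s < 1 -> continuous (period_integrand E) s.
Proof.
  intros HE Hs. apply (@ex_derive_continuous R_AbsRing R_NormedModule). unfold period_integrand.
  destruct (lam_facts E HE) as [H1 [H2 H3]].
  assert (0 < (Lam_plus E + Lam_minus E * s ^ 2) * (1 - s ^ 2)).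
  { apply Rmult_lt_0_compat. rewrite H2. nra. nra. }
  auto_derive. split. lra. split; auto. apply Rgt_not_eq. apply sqrt_lt_R0. lra.
Qed.

Lemma cos_pos_sin x : 0 <= x < PI/2 -> 0 < cos x /\ -1 < sin x < 1.
Proof.
  intros Hx. assert (0 < cos x). { apply cos_gt_0; pose proof PI_RGT_0; lra. }
  pose proof (sin2_cos2 x). unfold Rsqr in *. split; auto. split; nra.
Qed.

Lemma subst_eq E th : 0 <= E -> 0 <= th < PI/2 ->
  RInt (period_integrand E) 0 (sin th) = RInt (hh E) 0 th.
Proof.
  intros HE Hth.
  assert (Hc : is_RInt (fun y => scal (cos y) (period_integrand E (sin y))) 0 th
                 (RInt (period_integrand E) (sin 0) (sin th))).
  { apply (@is_RInt_comp R_CompleteNormedModule).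
    - intros x Hx. rewrite Rmin_left in Hx by lra. rewrite Rmax_right in Hx by lra.
      apply pi_cont; auto. apply cos_pos_sin. lra.
    - intros x _. split. auto_derive; auto. ring.
      apply (@ex_derive_continuous R_AbsRing R_NormedModule). auto_derive; auto. }
  rewrite sin_0 in Hc. apply (@is_RInt_unique R_CompleteNormedModule) in Hc. rewrite <- Hc.
  apply RInt_ext. intros x Hx. rewrite Rmin_left in Hx by lra. rewrite Rmax_right in Hx by lra.
  destruct (cos_pos_sin x ltac:(lra)) as [Hcos _].
  unfold scal; simpl; unfold mult; simpl. unfold period_integrand, hh, Qf.
  pose proof (Qf_ge4 E x HE) as HQ. unfold Qf in HQ.
  assert (E1 : 1 - sin x ^ 2 = (cos x)²). { pose proof (sin2_cos2 x). unfold Rsqr in *. nra. }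
  rewrite E1. rewrite sqrt_mult by (try lra; apply Rle_0_sqr). rewrite sqrt_Rsqr by lra.
  assert (0 < sqrt (Lam_plus E + Lam_minus E * sin x ^ 2)) by (apply sqrt_lt_R0; lra).
  field; lra.
Qed.

Definition II E := RInt (hh E) 0 (PI/2).

Lemma hh_bounds E x : 0 <= E -> 0 < hh E x <= 1/2.
Proof.
  intros HE. pose proof (Qf_ge4 E x HE). unfold hh.
  assert (2 <= sqrt (Qf E x)).
  { replace 2 with (sqrt (2*2)). apply sqrt_le_1_alt. lra. rewrite sqrt_square; lra. }
  split. apply Rinv_0_lt_compat. lra.
  replace (1/2) with (/2) by field. apply Rinv_le_contravar; lra.
Qed.

Lemma hh_cont E x : 0 <= E -> continuous (hh E) x.
Proof. intros. apply (@ex_derive_continuous R_AbsRing R_NormedModule). apply hh_deriv; auto. Qed.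

Lemma hh_ex E a b : 0 <= E -> ex_RInt (hh E) a b.
Proof. intros. apply (@ex_RInt_continuous R_CompleteNormedModule). intros; apply hh_cont; auto. Qed.

Lemma RInt0 a b : RInt (fun _ => 0) a b = 0.
Proof. rewrite (@RInt_const R_CompleteNormedModule). unfold scal; simpl; unfold mult; simpl. ring. Qed.

Lemma RIntc a b c : RInt (fun _ => c) a b = (b - a) * c.
Proof. rewrite (@RInt_const R_CompleteNormedModule). reflexivity. Qed.

Lemma tail_bound E th : 0 <= E -> th <= PI/2 ->
  0 <= RInt (hh E) th (PI/2) <= (PI/2 - th) / 2.
Proof.
  intros HE Hth. split.
  - rewrite <- (RInt0 th (PI/2)). apply RInt_le; auto.
    apply ex_RInt_const. apply hh_ex; auto. intros. left. apply hh_bounds; auto.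
  - replace ((PI/2 - th)/2) with (RInt (fun _ => 1/2) th (PI/2)) by (rewrite RIntc; simpl; field).
    apply RInt_le; auto. apply hh_ex; auto. apply ex_RInt_const. intros. apply hh_bounds; auto.
Qed.

Lemma subst_gen E : 0 <= E ->
  is_RInt_gen (period_integrand E) (at_point 0) (at_left 1) (II E).
Proof.
  intros HE P [eps Heps].
  pose proof PI_RGT_0 as Hpi.
  set (eta := Rmin eps (PI/2)).
  assert (Heta : 0 < eta /\ eta <= PI/2 /\ eta <= eps).
  { unfold eta. split. apply Rmin_glb_lt. apply cond_pos. lra. split. apply Rmin_r. apply Rmin_l. }
  set (b0 := sin (PI/2 - eta)).
  destruct (cos_pos_sin (PI/2 - eta) ltac:(lra)) as [_ Hb0].
  assert (Hb0' : 0 <= b0). { apply sin_ge_0; lra. }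
  apply Filter_prod with (fun a => a = 0) (fun b => b0 < b < 1).
  - reflexivity.
  - exists (mkposreal (1 - b0) ltac:(fold b0 in Hb0; lra)). intros y Hy Hy1.
    unfold ball in Hy; simpl in Hy; unfold AbsRing_ball in Hy; simpl in Hy.
    unfold abs, minus, plus, opp in Hy; simpl in Hy.
    apply Rabs_def2 in Hy. lra.
  - intros a b Ha Hb. simpl. subst a.
    destruct Hb as [Hb1 Hb2].
    set (th := asin b).
    assert (Hs : sin th = b) by (apply sin_asin; lra).
    pose proof (asin_bound b) as Hab. fold th in Hab.
    assert (Hth0 : 0 <= th).
    { destruct (Rle_or_lt 0 th) as [h|h]; auto.
      assert (sin th <= sin 0) by (apply sin_incr_1; lra). rewrite sin_0 in H. lra. }
    assert (Hth1 : PI/2 - eta < th).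
    { destruct (Rlt_or_le (PI/2 - eta) th) as [h|h]; auto.
      assert (sin th <= sin (PI/2 - eta)) by (apply sin_incr_1; lra). fold b0 in H. lra. }
    assert (Hth2 : th < PI/2).
    { destruct (Rlt_or_le th (PI/2)) as [h|h]; auto.
      assert (th = PI/2) by lra. rewrite H, sin_PI2 in Hs. lra. }
    exists (RInt (period_integrand E) 0 b). split.
    + apply (@RInt_correct R_CompleteNormedModule).
      apply (@ex_RInt_continuous R_CompleteNormedModule).
      intros z Hz. rewrite Rmin_left in Hz by lra. rewrite Rmax_right in Hz by lra.
      apply pi_cont; auto. lra.
    + apply Heps. unfold ball; simpl; unfold AbsRing_ball; simpl.
      unfold abs, minus, plus, opp; simpl.
      rewrite <- Hs. rewrite subst_eq by (auto; lra).
      unfold II. rewrite <- (@RInt_Chasles R_CompleteNormedModule (hh E) 0 th (PI/2)) by (apply hh_ex; auto).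
      unfold plus; simpl.
      pose proof (tail_bound E th HE ltac:(lra)).
      rewrite Rabs_left1 by lra. lra.
Qed.

Lemma Tper_eq E : 0 <= E -> Tper E = 8 / sqrt 3 * II E.
Proof.
  intros HE. unfold Tper. f_equal. apply (@is_RInt_gen_unique R_CompleteNormedModule).
  apply Proper_StrongProper, at_point_filter.
  apply Proper_StrongProper, at_left_proper_filter.
  apply subst_gen; auto.
Qed.

Lemma II_pos E : 0 <= E -> 0 < II E.
Proof.
  intros HE. unfold II. pose proof PI_RGT_0. replace 0 with (RInt (fun _ => 0) 0 (PI/2)) at 1 by apply RInt0.
  apply RInt_lt. lra. intros; apply hh_cont; auto.
  intros; apply (@ex_derive_continuous R_AbsRing R_NormedModule); auto_derive; auto.
  intros; apply hh_bounds; auto.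
Qed.

Lemma II_decr E1 E2 : 0 <= E1 < E2 -> II E2 < II E1.
Proof.
  intros [H1 H2]. unfold II. pose proof PI_RGT_0.
  apply RInt_lt. lra. intros; apply hh_cont; lra. intros; apply hh_cont; lra.
  intros x _. unfold hh.
  assert (Hq : Qf E1 x < Qf E2 x).
  { unfold Qf, Lam_plus, Lam_minus.
    assert (sqrt (1 + 2/3*E1) < sqrt (1 + 2/3*E2)) by (apply sqrt_lt_1_alt; lra).
    assert (0 <= sin x ^ 2) by apply pow2_ge_0.
    pose proof (sqrt_ge1 E1 H1). nra. }
  pose proof (Qf_ge4 E1 x H1).
  apply Rinv_lt_contravar. apply Rmult_lt_0_compat; apply sqrt_lt_R0; lra.
  apply sqrt_lt_1_alt; lra.
Qed.

Lemma hh_lower E x : 0 <= E -> 1/2 - E/12 <= hh E x.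
Proof.
  intros HE. unfold hh.
  assert (HQ : Qf E x <= (2 + E/3)^2).
  { unfold Qf. destruct (lam_facts E HE) as [Hm [Hp _]]. rewrite Hp.
    pose proof (sqrt_ge1 E HE). pose proof (sqrt_sq1 E HE).
    assert (Hr : sqrt (1 + 2/3*E) <= 1 + E/3) by nra.
    assert (0 <= sin x ^ 2 <= 1).
    { pose proof (sin2_cos2 x). unfold Rsqr in *. split. apply pow2_ge_0. nra. }
    unfold Lam_minus in *. nra. }
  pose proof (Qf_ge4 E x HE).
  assert (Hs : sqrt (Qf E x) <= 2 + E/3).
  { rewrite <- (sqrt_pow2 (2 + E/3)) by lra. apply sqrt_le_1_alt; lra. }
  assert (0 < sqrt (Qf E x)) by (apply sqrt_lt_R0; lra).
  apply Rle_trans with (/ (2 + E/3)).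
  - apply (Rmult_le_reg_r (2 + E/3)). lra. rewrite Rinv_l by lra. nra.
  - apply Rinv_le_contravar; lra.
Qed.

Lemma II_near E : 0 <= E -> PI/4 - PI/2 * (E/12) <= II E <= PI/4.
Proof.
  intros HE. pose proof PI_RGT_0. unfold II. split.
  - replace (PI/4 - PI/2*(E/12)) with (RInt (fun _ => 1/2 - E/12) 0 (PI/2)) by (rewrite RIntc; simpl; field).
    apply RInt_le. lra. apply ex_RInt_const. apply hh_ex; auto. intros; apply hh_lower; auto.
  - replace (PI/4) with (RInt (fun _ => 1/2) 0 (PI/2)) by (rewrite RIntc; simpl; field).
    apply RInt_le. lra. apply hh_ex; auto. apply ex_RInt_const. intros; apply hh_bounds; auto.
Qed.

Lemma Tper_lim : filterlim Tper (at_right 0) (locally (2 * PI / sqrt 3)).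
Proof.
  intros P [eps Heps].
  assert (H3 : 1 < sqrt 3).
  { rewrite <- sqrt_1. apply sqrt_lt_1_alt. lra. }
  pose proof PI_RGT_0. pose proof PI_4.
  exists (mkposreal (eps/2) ltac:(pose proof (cond_pos eps); lra)).
  intros E HE HE0. apply Heps.
  unfold ball in HE; simpl in HE; unfold AbsRing_ball in HE; simpl in HE.
  unfold abs, minus, plus, opp in HE; simpl in HE. apply Rabs_def2 in HE.
  unfold ball; simpl; unfold AbsRing_ball; simpl.
  unfold abs, minus, plus, opp; simpl.
  rewrite Tper_eq by lra. destruct (II_near E ltac:(lra)) as [Ha Hb].
  replace (8 / sqrt 3 * II E + - (2 * PI / sqrt 3)) with (8 * (II E - PI/4) / sqrt 3) by (field; lra).
  rewrite Rabs_div by lra. rewrite Rabs_mult. rewrite (Rabs_pos_eq (sqrt 3)) by lra.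
  rewrite Rabs_pos_eq by lra. rewrite Rabs_left1 by lra.
  assert (Hi : 0 < / sqrt 3 < 1).
  { split. apply Rinv_0_lt_compat; lra. rewrite <- Rinv_1. apply Rinv_lt_contravar; lra. }
  pose proof (cond_pos eps). simpl in HE.
  unfold Rdiv. nra.
Qed.

Lemma deriv_cpt F x l : is_derive F x l -> continuity_pt F x.
Proof.
  intros H. apply derivable_continuous_pt. exists l. apply is_derive_Reals; auto.
Qed.

Lemma deriv0_const F : (forall x, is_derive F x 0) -> forall x, F x = F 0.
Proof.
  intros H x. destruct (MVT_gen F 0 x (fun _ => 0)) as [c [_ Hc]].
  intros; apply H. intros; eapply deriv_cpt; apply H. lra.
Qed.

Definition kk E x := sqrt 3 / 2 * sqrt (Qf E x).
Definition gg E x := / kk E x.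
Definition tau E x : R := RInt (gg E) 0 x.
Definition mlow E := / (sqrt 3 / 2 * sqrt (Lam_plus E + Lam_minus E)).

Lemma sqrt3_pos : 0 < sqrt 3.
Proof. apply sqrt_lt_R0; lra. Qed.

Lemma kk_pos E x : 0 <= E -> 0 < kk E x.
Proof.
  intros HE. unfold kk. pose proof sqrt3_pos. pose proof (Qf_ge4 E x HE).
  assert (0 < sqrt (Qf E x)) by (apply sqrt_lt_R0; lra). nra.
Qed.

Lemma mlow_pos E : 0 <= E -> 0 < mlow E.
Proof.
  intros HE. unfold mlow. destruct (lam_facts E HE) as [H1 [H2 _]]. pose proof sqrt3_pos.
  assert (0 < sqrt (Lam_plus E + Lam_minus E)) by (apply sqrt_lt_R0; lra).
  apply Rinv_0_lt_compat. nra.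
Qed.

Lemma gg_lower E x : 0 <= E -> mlow E <= gg E x.
Proof.
  intros HE. unfold mlow, gg. apply Rinv_le_contravar. apply kk_pos; auto.
  unfold kk. apply Rmult_le_compat_l. pose proof sqrt3_pos; lra.
  apply sqrt_le_1_alt. unfold Qf. destruct (lam_facts E HE) as [H1 [H2 _]].
  assert (0 <= sin x ^ 2 <= 1).
  { pose proof (sin2_cos2 x). unfold Rsqr in *. split. apply pow2_ge_0. nra. }
  nra.
Qed.

Lemma gg_deriv E x : 0 <= E -> ex_derive (gg E) x.
Proof.
  intros HE. pose proof (kk_pos E x HE). pose proof (Qf_ge4 E x HE).
  unfold gg, kk, Qf in *. auto_derive. repeat split; try lra. replace (sin x * (sin x * 1)) with (sin x ^ 2) by ring; lra.
Qed.

Lemma gg_cont E x : 0 <= E -> continuous (gg E) x.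
Proof. intros. apply (@ex_derive_continuous R_AbsRing R_NormedModule). apply gg_deriv; auto. Qed.

Lemma gg_ex E a b : 0 <= E -> ex_RInt (gg E) a b.
Proof. intros. apply (@ex_RInt_continuous R_CompleteNormedModule). intros; apply gg_cont; auto. Qed.

Lemma tau_deriv E x : 0 <= E -> is_derive (tau E) x (gg E x).
Proof.
  intros HE. apply (@is_derive_RInt R_NormedModule (gg E) (tau E) 0).
  exists (mkposreal 1 Rlt_0_1). intros y _. unfold tau.
  apply (@RInt_correct R_CompleteNormedModule). apply gg_ex; auto.
  apply gg_cont; auto.
Qed.

Lemma tau_lower E x y : 0 <= E -> y <= x -> mlow E * (x - y) <= tau E x - tau E y.
Proof.
  intros HE Hxy. destruct (MVT_gen (tau E) y x (gg E)) as [c [_ Hc]].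
  intros; apply tau_deriv; auto. intros; eapply deriv_cpt; apply tau_deriv; auto.
  rewrite Hc. apply Rmult_le_compat_r. lra. apply gg_lower; auto.
Qed.

Lemma tau0 E : tau E 0 = 0.
Proof. unfold tau. apply (@RInt_point R_CompleteNormedModule). Qed.

Lemma tau_surj E t : 0 <= E -> exists x, tau E x = t.
Proof.
  intros HE. pose proof (mlow_pos E HE) as Hm.
  set (x2 := (Rabs t + 1) / mlow E). set (x1 := - x2).
  assert (Hx2 : 0 < x2). { unfold x2. apply Rdiv_lt_0_compat; auto. pose proof (Rabs_pos t); lra. }
  assert (H2 : t < tau E x2).
  { pose proof (tau_lower E x2 0 HE ltac:(lra)). rewrite tau0 in H.
    assert (mlow E * (x2 - 0) = Rabs t + 1) by (unfold x2; field; lra).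
    pose proof (Rle_abs t). lra. }
  assert (H1 : tau E x1 < t).
  { pose proof (tau_lower E 0 x1 HE ltac:(unfold x1; lra)). rewrite tau0 in H.
    assert (mlow E * (0 - x1) = Rabs t + 1) by (unfold x1, x2; field; lra).
    pose proof (Rle_abs (-t)). rewrite Rabs_Ropp in H1. lra. }
  destruct (IVT (fun x => tau E x - t) x1 x2) as [z [_ Hz]].
  - intros x. apply continuity_pt_minus. eapply deriv_cpt; apply tau_deriv; auto.
    apply continuity_pt_const. intros a b; auto.
  - unfold x1; lra.
  - cbv beta; lra.
  - cbv beta; lra.
  - exists z; lra.
Qed.

Definition Phi E t := epsilon (inhabits 0) (fun x => tau E x = t).

Lemma tau_Phi E t : 0 <= E -> tau E (Phi E t) = t.
Proof. intros HE. unfold Phi. apply (epsilon_spec (inhabits 0) (fun x => tau E x = t)). apply tau_surj; auto. Qed.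

Lemma tau_incr E x y : 0 <= E -> x < y -> tau E x < tau E y.
Proof.
  intros HE Hxy. pose proof (tau_lower E y x HE ltac:(lra)). pose proof (mlow_pos E HE). nra.
Qed.

Lemma Phi_tau E x : 0 <= E -> Phi E (tau E x) = x.
Proof.
  intros HE. set (y := Phi E (tau E x)). assert (H : tau E y = tau E x) by apply tau_Phi, HE.
  destruct (Rtotal_order y x) as [h|[h|h]]; auto.
  - apply (tau_incr E) in h; auto. lra.
  - apply (tau_incr E) in h; auto. lra.
Qed.

Lemma Phi_incr E a b : 0 <= E -> a < b -> Phi E a < Phi E b.
Proof.
  intros HE Hab. destruct (Rlt_or_le (Phi E a) (Phi E b)) as [h|h]; auto.
  destruct h as [h|h].
  - apply (tau_incr E) in h; auto. rewrite !tau_Phi in h by auto. lra.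
  - assert (tau E (Phi E b) = tau E (Phi E a)) by (rewrite h; auto).
    rewrite !tau_Phi in H by auto. lra.
Qed.

Lemma Phi_lip E a b : 0 <= E -> a <= b -> Phi E b - Phi E a <= (b - a) / mlow E.
Proof.
  intros HE Hab. pose proof (mlow_pos E HE).
  assert (Phi E a <= Phi E b). { destruct Hab as [h|h]. left; apply Phi_incr; auto. subst; lra. }
  pose proof (tau_lower E (Phi E b) (Phi E a) HE H0). rewrite !tau_Phi in H1 by auto.
  apply (Rmult_le_reg_l (mlow E)); auto. unfold Rdiv. field_simplify; lra.
Qed.

Lemma Phi_cont E t : 0 <= E -> continuity_pt (Phi E) t.
Proof.
  intros HE. pose proof (mlow_pos E HE).
  unfold continuity_pt, continue_in, limit1_in, limit_in. simpl. unfold R_dist.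
  intros eps Heps. exists (eps * mlow E). split. nra.
  intros x [_ Hx]. destruct (Rle_or_lt t x) as [h|h].
  - pose proof (Phi_lip E t x HE h). pose proof (Phi_incr E t x HE).
    rewrite Rabs_pos_eq in Hx by lra.
    assert (Phi E t <= Phi E x). { destruct h as [h|h]. left; auto. subst; lra. }
    rewrite Rabs_pos_eq by lra.
    apply Rle_lt_trans with ((x - t) / mlow E); auto.
    apply (Rmult_lt_reg_l (mlow E)); auto. unfold Rdiv. field_simplify; nra.
  - pose proof (Phi_lip E x t HE ltac:(lra)). pose proof (Phi_incr E x t HE h).
    rewrite Rabs_left in Hx by lra. rewrite Rabs_left by lra.
    apply Rle_lt_trans with ((t - x) / mlow E). lra.
    apply (Rmult_lt_reg_l (mlow E)); auto. unfold Rdiv. field_simplify; nra.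
Qed.

Lemma Phi_deriv E t : 0 <= E -> is_derive (Phi E) t (kk E (Phi E t)).
Proof.
  intros HE.
  set (Prf := fun a (_ : Phi E (t - 1) <= a <= Phi E (t + 1)) =>
          exist (fun l => derivable_pt_lim (tau E) a l) (gg E a)
            (proj1 (is_derive_Reals _ _ _) (tau_deriv E a HE))).
  assert (Hinc : Phi E (t - 1) <= Phi E t <= Phi E (t + 1)).
  { split; left; apply Phi_incr; auto; lra. }
  pose proof (derivable_pt_lim_recip_interv (tau E) (Phi E) (t - 1) (t + 1) t
               Prf (Phi_cont E t HE) ltac:(lra) ltac:(lra) Hinc) as H.
  apply is_derive_Reals.
  replace (kk E (Phi E t)) with (1 / derive_pt (tau E) (Phi E t) (Prf (Phi E t) Hinc)).
  apply H.
  - intros x _. unfold comp, id. apply tau_Phi; auto.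
  - simpl. unfold gg. apply Rinv_neq_0_compat. apply Rgt_not_eq. apply kk_pos; auto.
  - simpl. unfold gg. pose proof (kk_pos E (Phi E t) HE). field. lra.
Qed.

Lemma chainR f g x df dg : is_derive f (g x) df -> is_derive g x dg ->
  is_derive (fun t => f (g t)) x (dg * df).
Proof. intros H1 H2. apply (is_derive_comp f g x df dg H1 H2). Qed.

Lemma multR f g x df dg : is_derive f x df -> is_derive g x dg ->
  is_derive (fun t => f t * g t) x (df * g x + f x * dg).
Proof. intros H1 H2. apply (is_derive_mult f g x df dg H1 H2). intros; apply Rmult_comm. Qed.

Lemma shiftR c x : is_derive (fun t => t + c) x 1.
Proof. auto_derive; auto. Qed.

Lemma gg_shift E x : gg E (x + PI) = gg E x.
Proof. unfold gg, kk, Qf. rewrite neg_sin. f_equal. f_equal. f_equal. f_equal. ring. Qed.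

Lemma gg_refl E x : gg E (PI - x) = gg E x.
Proof. unfold gg, kk, Qf. rewrite sin_PI_x. reflexivity. Qed.

Lemma tau_shift E x : 0 <= E -> tau E (x + PI) = tau E x + tau E PI.
Proof.
  intros HE. pose proof (deriv0_const (fun x => tau E (x + PI) - tau E x)) as H.
  simpl in H. enough (tau E (x + PI) - tau E x = tau E (0 + PI) - tau E 0) by (rewrite tau0, Rplus_0_l in H0; lra).
  apply H. intros y. replace 0 with (1 * gg E (y + PI) - gg E y) by (rewrite gg_shift; ring).
  apply (is_derive_minus (fun x => tau E (x + PI)) (tau E)).
  apply chainR. apply tau_deriv; auto. apply shiftR. apply tau_deriv; auto.
Qed.

Lemma tau_refl E x : 0 <= E -> tau E (PI - x) + tau E x = tau E PI.
Proof.
  intros HE. pose proof (deriv0_const (fun x => tau E (PI - x) + tau E x)) as H.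
  simpl in H. enough (tau E (PI - x) + tau E x = tau E (PI - 0) + tau E 0) by (rewrite tau0, Rminus_0_r in H0; lra).
  apply H. intros y. replace 0 with ((-1) * gg E (PI - y) + gg E y) by (rewrite gg_refl; simpl; ring).
  apply (is_derive_plus (fun x => tau E (PI - x)) (tau E)).
  apply chainR. apply tau_deriv; auto. auto_derive; auto. apply tau_deriv; auto.
Qed.

Definition TT E := 4 * tau E (PI/2).

Lemma tau_period E x : 0 <= E -> tau E (x + 2 * PI) = tau E x + TT E.
Proof.
  intros HE. unfold TT.
  pose proof (tau_refl E (PI/2) HE). replace (PI - PI/2) with (PI/2) in H by field.
  replace (x + 2 * PI) with ((x + PI) + PI) by ring. rewrite !tau_shift by auto. lra.
Qed.

Lemma TT_Tper E : 0 <= E -> TT E = Tper E.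
Proof.
  intros HE. rewrite Tper_eq by auto. unfold TT, tau, II.
  rewrite (RInt_ext (gg E) (fun x => scal (2 / sqrt 3) (hh E x))).
  rewrite (@RInt_scal R_CompleteNormedModule). unfold scal; simpl; unfold mult; simpl.
  pose proof sqrt3_pos. field. lra. apply hh_ex; auto.
  intros x _. unfold scal; simpl; unfold mult; simpl. unfold gg, kk, hh.
  pose proof (Qf_ge4 E x HE). assert (0 < sqrt (Qf E x)) by (apply sqrt_lt_R0; lra).
  pose proof sqrt3_pos. field. lra.
Qed.

Lemma Phi_period E t : 0 <= E -> Phi E (t + TT E) = Phi E t + 2 * PI.
Proof.
  intros HE. rewrite <- (tau_Phi E t HE) at 1. rewrite <- tau_period by auto.
  apply Phi_tau; auto.
Qed.

Definition kkd E x := 3/4 * Lam_minus E * sin x * cos x / kk E x.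

Lemma kk_sq E x : 0 <= E -> kk E x * kk E x = 3/4 * Qf E x.
Proof.
  intros HE. unfold kk. pose proof (Qf_ge4 E x HE).
  replace (sqrt 3 / 2 * sqrt (Qf E x) * (sqrt 3 / 2 * sqrt (Qf E x)))
    with ((sqrt 3 * sqrt 3) * (sqrt (Qf E x) * sqrt (Qf E x)) / 4) by field.
  rewrite !sqrt_sqrt by lra. field.
Qed.

Lemma kk_deriv E x : 0 <= E -> is_derive (kk E) x (kkd E x).
Proof.
  intros HE. pose proof (Qf_ge4 E x HE). pose proof (kk_pos E x HE). unfold Qf in H.
  unfold kkd. unfold kk in *. unfold Qf in *. auto_derive.
  - replace (sin x * (sin x * 1)) with (sin x ^ 2) by ring. lra.
  - replace (sin x * (sin x * 1)) with (sin x ^ 2) by ring.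
    assert (0 < sqrt (Lam_plus E + Lam_minus E * sin x ^ 2)) by (apply sqrt_lt_R0; lra).
    pose proof sqrt3_pos.
    assert (sqrt 3 * sqrt 3 = 3) by (apply sqrt_sqrt; lra).
    field_simplify; try lra. set (s3 := sqrt 3) in *. replace 6 with (2 * 3) by ring. rewrite <- H3. field. lra.
Qed.

Definition th E c t := Phi E (t + c).
Definition Ysol E A c t := A * sin (th E c t).
Definition Y1sol E A c t := A * (cos (th E c t) * kk E (th E c t)).

Lemma th_deriv E c t : 0 <= E -> is_derive (th E c) t (kk E (th E c t)).
Proof.
  intros HE. unfold th. replace (kk E (Phi E (t + c))) with (1 * kk E (Phi E (t + c))) by ring.
  apply (chainR (Phi E) (fun t => t + c)). apply Phi_deriv; auto. apply shiftR.
Qed.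

Lemma Y_deriv E A c t : 0 <= E -> is_derive (Ysol E A c) t (Y1sol E A c t).
Proof.
  intros HE. unfold Ysol, Y1sol. apply is_derive_scal.
  replace (cos (th E c t) * kk E (th E c t)) with (kk E (th E c t) * cos (th E c t)) by ring.
  apply (chainR sin (th E c)). apply is_derive_sin. apply th_deriv; auto.
Qed.

Lemma Y1_deriv E A c t : 0 <= E -> A * A = Lam_minus E ->
  is_derive (Y1sol E A c) t (- (3 * Ysol E A c t) - 3 / 2 * Ysol E A c t ^ 3).
Proof.
  intros HE HA. unfold Y1sol.
  set (x := th E c t).
  assert (D : is_derive (fun t => cos (th E c t) * kk E (th E c t)) t
     ((kk E x * - sin x) * kk E x + cos x * (kk E x * kkd E x))).
  { apply (multR (fun t => cos (th E c t)) (fun t => kk E (th E c t))).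
    apply (chainR cos (th E c)). apply is_derive_cos. apply th_deriv; auto.
    apply (chainR (kk E) (th E c)). apply kk_deriv; auto. apply th_deriv; auto. }
  apply is_derive_scal with (k := A) in D.
  replace (- (3 * Ysol E A c t) - 3 / 2 * Ysol E A c t ^ 3) with
    (A * ((kk E x * - sin x) * kk E x + cos x * (kk E x * kkd E x))).
  exact D.
  unfold Ysol. fold x.
  pose proof (kk_pos E x HE).
  assert (H1 : kk E x * kkd E x = 3/4 * Lam_minus E * sin x * cos x) by (unfold kkd; field; lra).
  replace (A * (kk E x * - sin x * kk E x + cos x * (kk E x * kkd E x))) with
    (A * (- sin x * (kk E x * kk E x) + cos x * (kk E x * kkd E x))) by ring.
  rewrite H1, kk_sq by auto. unfold Qf. destruct (lam_facts E HE) as [_ [Hp _]].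
  rewrite Hp, <- HA.
  pose proof (sin2_cos2 x) as Hsc. unfold Rsqr in Hsc.
  transitivity (- (3 * (A * sin x)) - 3 / 2 * (A * sin x) ^ 3 + 3/4 * A^3 * sin x * (cos x * cos x + sin x * sin x - 1)).
  field. replace (cos x * cos x + sin x * sin x - 1) with 0 by lra. ring.
Qed.

Lemma energy_nonneg a b : 0 <= energy a b.
Proof. unfold energy. assert (0 <= b^2) by apply pow2_ge_0. assert (0 <= a^2) by apply pow2_ge_0. nra. Qed.

Lemma kk_refl E x : kk E (PI - x) = kk E x.
Proof. unfold kk, Qf. rewrite sin_PI_x. reflexivity. Qed.

Lemma angle a b : exists psi,
  sqrt (Lam_minus (energy a b)) * sin psi = a /\
  sqrt (Lam_minus (energy a b)) * (cos psi * kk (energy a b) psi) = b.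
Proof.
  set (E := energy a b). pose proof (energy_nonneg a b) as HE. fold E in HE.
  destruct (lam_facts E HE) as [Hm [Hp HEm]].
  set (M := Lam_minus E) in *. set (A := sqrt M).
  assert (HA : A * A = M) by (apply sqrt_sqrt; auto).
  assert (HA0 : 0 <= A) by apply sqrt_pos.
  assert (HEab : E = b^2/2 + 3/2*a^2 + 3/8*a^4) by reflexivity.
  destruct Hm as [Hm|Hm].
  2:{
    assert (a = 0 /\ b = 0).
    { rewrite <- Hm in HEm. assert (0 <= b^2) by apply pow2_ge_0.
      assert (0 <= a^2) by apply pow2_ge_0. assert (b^2 = 0 /\ a^2 = 0) by nra.
      destruct H1. split; apply Rsqr_0_uniq; unfold Rsqr; nra. }
    destruct H as [-> ->]. exists 0. assert (A = 0) by nra. rewrite H. split; ring. }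
  assert (HApos : 0 < A) by nra.
  assert (Ha2 : a^2 <= M).
  { assert (0 <= b^2) by apply pow2_ge_0. nra. }
  set (s0 := a / A).
  assert (Hs0 : A * s0 = a) by (unfold s0; field; lra).
  assert (Hss : s0 * s0 <= 1).
  { apply (Rmult_le_reg_l (A * A)). nra. replace (A * A * (s0 * s0)) with ((A * s0)^2) by ring.
    rewrite Hs0. lra. }
  assert (Hs01 : -1 <= s0 <= 1) by (split; nra).
  set (p0 := asin s0).
  assert (Hsin : sin p0 = s0) by (apply sin_asin; auto).
  assert (Hcos : cos p0 = sqrt (1 - s0²)) by (apply cos_asin; auto).
  assert (Hc0 : 0 <= cos p0) by (rewrite Hcos; apply sqrt_pos).
  assert (Hcc : cos p0 * cos p0 = 1 - s0 * s0).
  { rewrite Hcos. apply sqrt_sqrt. unfold Rsqr. nra. }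
  pose proof (kk_pos E p0 HE) as Hk.
  pose proof (kk_sq E p0 HE) as Hkk. unfold Qf in Hkk. rewrite Hsin in Hkk. fold M in Hkk.
  set (X := A * (cos p0 * kk E p0)).
  assert (HX0 : 0 <= X) by (unfold X; apply Rmult_le_pos; auto; apply Rmult_le_pos; lra).
  assert (HX2 : X * X = b * b).
  { transitivity ((A * A) * (cos p0 * cos p0) * (kk E p0 * kk E p0)). unfold X; ring.
    rewrite HA, Hcc, Hkk, Hp.
    transitivity (3/4 * (M - (A * s0) ^ 2) * (M + 4 + (A * s0)^2)).
    rewrite <- HA. field. rewrite Hs0.
    rewrite <- HEm in HEab. nra. }
  assert (HXb : X = Rabs b).
  { assert (Rabs b * Rabs b = b * b) by (rewrite <- Rabs_mult; apply Rabs_pos_eq; nra).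
    pose proof (Rabs_pos b). nra. }
  destruct (Rle_or_lt 0 b) as [hb|hb].
  - exists p0. split. rewrite Hsin. auto. fold X. rewrite HXb. apply Rabs_pos_eq; auto.
  - exists (PI - p0). split. rewrite sin_PI_x, Hsin; auto.
    rewrite Rtrigo_facts.cos_pi_minus, kk_refl.
    replace (A * (- cos p0 * kk E p0)) with (- X) by (unfold X; ring).
    rewrite HXb. rewrite Rabs_left; auto. ring.
Qed.

Lemma plusR f g x df dg : is_derive f x df -> is_derive g x dg ->
  is_derive (fun t => f t + g t) x (df + dg).
Proof. intros H1 H2. apply (is_derive_plus f g x df dg H1 H2). Qed.

Lemma minusR f g x df dg : is_derive f x df -> is_derive g x dg ->
  is_derive (fun t => f t - g t) x (df - dg).
Proof. intros H1 H2. apply (is_derive_minus f g x df dg H1 H2). Qed.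

Lemma derive_eqv (f : R -> R) (x l l2 : R) : is_derive f x l -> l = l2 -> is_derive f x l2.
Proof. intros H ->. auto. Qed.

Lemma abs_inv x c : Rabs x <= c -> - c <= x <= c.
Proof. intros H. pose proof (Rle_abs x). pose proof (Rle_abs (- x)). rewrite Rabs_Ropp in H1. lra. Qed.

Lemma gronwall (W dW : R -> R) C : 0 <= C -> (forall t, 0 <= W t) -> W 0 = 0 ->
  (forall t, is_derive W t (dW t)) -> (forall t, Rabs (dW t) <= C * W t) ->
  forall t, W t = 0.
Proof.
  intros HC Hpos H0 HD Hb t.
  destruct (Rle_or_lt 0 t) as [ht|ht].
  - set (V := fun x => W x * exp (- C * x)).
    assert (HV : forall x, is_derive V x (dW x * exp (- C * x) + W x * (- C * exp (- C * x)))).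
    { intros x. unfold V. apply (multR W (fun x => exp (- C * x))). apply HD. auto_derive; auto. ring. }
    destruct (MVT_gen V 0 t _ (fun x _ => HV x)) as [c [_ Hc]].
    { intros x _. eapply deriv_cpt. apply HV. }
    assert (dW c * exp (- C * c) + W c * (- C * exp (- C * c)) <= 0).
    { pose proof (exp_pos (- C * c)). pose proof (Hb c). apply abs_inv in H1. nra. }
    assert (V t <= 0). { unfold V in *. rewrite H0 in Hc. nra. }
    unfold V in H1. pose proof (exp_pos (- C * t)). pose proof (Hpos t). nra.
  - set (V := fun x => W x * exp (C * x)).
    assert (HV : forall x, is_derive V x (dW x * exp (C * x) + W x * (C * exp (C * x)))).
    { intros x. unfold V. apply (multR W (fun x => exp (C * x))). apply HD. auto_derive; auto. ring. }
    destruct (MVT_gen V 0 t _ (fun x _ => HV x)) as [c [_ Hc]].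
    { intros x _. eapply deriv_cpt. apply HV. }
    assert (0 <= dW c * exp (C * c) + W c * (C * exp (C * c))).
    { pose proof (exp_pos (C * c)). pose proof (Hb c). apply abs_inv in H1. nra. }
    assert (V t <= 0). { unfold V in *. rewrite H0 in Hc. nra. }
    unfold V in H1. pose proof (exp_pos (C * t)). pose proof (Hpos t). nra.
Qed.

Definition fR (y : R) := - (3 * y) - 3 / 2 * y ^ 3.

Lemma energy_cons a b z : is_solution a b z ->
  forall t, (Derive z t)^2/2 + 3/2 * (z t)^2 + 3/8 * (z t)^4 = energy a b.
Proof.
  intros [Hd [Hd2 [H0 H1]]] t.
  assert (Hz : forall t, is_derive z t (Derive z t)) by (intros; apply Derive_correct; auto).
  set (F := fun t => (Derive z t)^2/2 + 3/2 * (z t)^2 + 3/8 * (z t)^4).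
  assert (HF : forall t, is_derive F t 0).
  { intros s. unfold F. 
    eapply derive_eqv.
    apply plusR. apply plusR.
    - apply (chainR (fun y => y^2/2) (Derive z)). auto_derive; auto. apply Hd2.
    - apply (chainR (fun y => 3/2 * y^2) z). auto_derive; auto. apply Hz.
    - apply (chainR (fun y => 3/8 * y^4) z). auto_derive; auto. apply Hz.
    - simpl. field. }
  change (F t = energy a b). rewrite (deriv0_const F HF t). unfold F, energy. rewrite H0, H1. reflexivity.
Qed.

Lemma sol_bound a b z : is_solution a b z -> forall t, (z t)^2 <= 2/3 * energy a b.
Proof.
  intros Hs t. pose proof (energy_cons a b z Hs t).
  assert (0 <= (Derive z t)^2) by apply pow2_ge_0.
  assert (0 <= (z t)^4). { replace ((z t)^4) with (((z t)^2)^2) by ring. apply pow2_ge_0. }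
  lra.
Qed.

Lemma uniq a b z1 z2 : is_solution a b z1 -> is_solution a b z2 -> forall t, z1 t = z2 t.
Proof.
  intros S1 S2.
  pose proof (sol_bound a b z1 S1) as B1. pose proof (sol_bound a b z2 S2) as B2.
  set (B := 2/3 * energy a b) in *.
  destruct S1 as [Hd1 [Hdd1 [H01 H11]]]. destruct S2 as [Hd2 [Hdd2 [H02 H12]]].
  assert (Hz1 : forall t, is_derive z1 t (Derive z1 t)) by (intros; apply Derive_correct; auto).
  assert (Hz2 : forall t, is_derive z2 t (Derive z2 t)) by (intros; apply Derive_correct; auto).
  set (w := fun t => z1 t - z2 t). set (u := fun t => Derive z1 t - Derive z2 t).
  set (W := fun t => w t * w t + u t * u t).
  set (dW := fun t => 2 * w t * u t + 2 * u t * (fR (z1 t) - fR (z2 t))).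
  set (C := 2 + 9/2 * B).
  assert (HB : 0 <= B) by (pose proof (B1 0); pose proof (pow2_ge_0 (z1 0)); lra).
  assert (HW : forall t, W t = 0).
  { apply (gronwall W dW C).
    - unfold C; lra.
    - intros t; unfold W; nra.
    - unfold W, w, u. rewrite H01, H02, H11, H12. ring.
    - intros t. unfold W, dW.
      assert (Hw : is_derive w t (u t)) by (apply minusR; auto).
      assert (Hu : is_derive u t (fR (z1 t) - fR (z2 t))) by (apply minusR; auto).
      eapply derive_eqv.
      apply plusR; apply multR; eauto.
      ring.
    - intros t. unfold dW, W, fR.
      set (p := z1 t). set (q := z2 t).
      assert (Hp : p^2 <= B) by apply B1. assert (Hq : q^2 <= B) by apply B2.
      set (S := p*p + p*q + q*q).
      assert (HS : 0 <= S <= 3 * B) by (unfold S; split; nra).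
      replace (2 * w t * u t + 2 * u t * (- (3 * p) - 3 / 2 * p ^ 3 - (- (3 * q) - 3 / 2 * q ^ 3)))
        with (- (2 * w t * u t) * (2 + 3/2 * S)).
      2:{ unfold w, S. fold p q. field. }
      rewrite Rabs_mult. rewrite (Rabs_pos_eq (2 + 3/2 * S)) by lra.
      assert (Rabs (- (2 * w t * u t)) <= w t * w t + u t * u t).
      { apply Rabs_le. pose proof (pow2_ge_0 (w t + u t)). pose proof (pow2_ge_0 (w t - u t)). split; nra. }
      unfold C. assert (0 <= w t * w t + u t * u t) by nra.
      apply Rle_trans with ((w t * w t + u t * u t) * (2 + 3/2 * S)).
      apply Rmult_le_compat_r; lra. nra. }
  intros t. specialize (HW t). unfold W in HW. assert (w t = 0) by nra. unfold w in H. lra.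
Qed.

Lemma sin_lt1 x : PI/2 < x < PI/2 + 2 * PI -> sin x < 1.
Proof.
  intros Hx. set (u := x - PI/2).
  replace x with (u + PI/2) by (unfold u; ring).
  rewrite sin_plus, sin_PI2, cos_PI2.
  replace u with (2 * (u / 2)) by field. rewrite cos_2a_sin.
  assert (0 < sin (u/2)) by (apply sin_gt_0; unfold u; lra). nra.
Qed.

Lemma sin_2PI_add x : sin (x + 2 * PI) = sin x.
Proof. rewrite sin_plus, sin_2PI, cos_2PI. ring. Qed.

Theorem lemma8p1 :
  (forall alpha beta : R,
     exists y : R -> R,
       is_solution alpha beta y /\
       (forall z : R -> R, is_solution alpha beta z -> forall t, z t = y t) /\
       0 < Tper (energy alpha beta) /\
       (forall t, y (t + Tper (energy alpha beta)) = y t) /\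
       ((alpha, beta) <> (0, 0) ->
          forall tau, 0 < tau < Tper (energy alpha beta) ->
            exists t, y (t + tau) <> y t)) /\
  (forall E, 0 <= E -> ex_RInt_gen (period_integrand E) (at_point 0) (at_left 1)) /\
  (forall E1 E2, 0 <= E1 < E2 -> Tper E2 < Tper E1) /\
  filterlim Tper (at_right 0) (locally (2 * PI / sqrt 3)).
Proof.
  split; [| split; [| split]].
  - intros a b.
    set (E := energy a b). pose proof (energy_nonneg a b) as HE. fold E in HE.
    destruct (angle a b) as [psi [Ha Hb]]. fold E in Ha, Hb.
    set (A := sqrt (Lam_minus E)) in *.
    assert (HA : A * A = Lam_minus E) by (apply sqrt_sqrt; apply lam_facts; auto).
    set (c := tau E psi).
    assert (Hth0 : th E c 0 = psi) by (unfold th, c; rewrite Rplus_0_l; apply Phi_tau; auto).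
    assert (HDer : forall t, Derive (Ysol E A c) t = Y1sol E A c t).
    { intros t. apply is_derive_unique. apply Y_deriv; auto. }
    assert (Hsol : is_solution a b (Ysol E A c)).
    { split; [| split; [| split]].
      - intros t. exists (Y1sol E A c t). apply Y_deriv; auto.
      - intros t. apply (is_derive_ext (Y1sol E A c)). intros; rewrite HDer; auto.
        apply Y1_deriv; auto.
      - unfold Ysol. rewrite Hth0. auto.
      - rewrite HDer. unfold Y1sol. rewrite Hth0. auto. }
    exists (Ysol E A c). split; [auto | split; [| split; [| split]]].
    + intros z Hz t. apply (uniq a b); auto.
    + rewrite Tper_eq by auto. pose proof sqrt3_pos. pose proof (II_pos E HE).
      apply Rmult_lt_0_compat; auto. apply Rdiv_lt_0_compat; lra.
    + intros t. rewrite <- TT_Tper by auto. unfold Ysol, th.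
      replace (t + TT E + c) with ((t + c) + TT E) by ring.
      rewrite Phi_period by auto. rewrite sin_2PI_add. auto.
    + intros Hab t0 Ht0. rewrite <- TT_Tper in Ht0 by auto.
      assert (HA0 : 0 < A).
      { assert (0 <= A) by apply sqrt_pos. destruct H as [H|H]; auto.
        exfalso. apply Hab.
        assert (a = 0) by (rewrite <- Ha, <- H; apply Rmult_0_l). assert (b = 0) by (rewrite <- Hb, <- H; apply Rmult_0_l).
        rewrite H0, H1. reflexivity. }
      exists (tau E (PI/2) - c). unfold Ysol, th.
      replace (tau E (PI / 2) - c + t0 + c) with (tau E (PI/2) + t0) by ring.
      replace (tau E (PI / 2) - c + c) with (tau E (PI/2)) by ring.
      rewrite Phi_tau by auto. rewrite sin_PI2.
      assert (Hx1 : PI/2 < Phi E (tau E (PI/2) + t0)).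
      { rewrite <- (Phi_tau E (PI/2)) at 1 by auto. apply Phi_incr; auto; lra. }
      assert (Hx2 : Phi E (tau E (PI/2) + t0) < PI/2 + 2 * PI).
      { rewrite <- (Phi_tau E (PI/2)) at 2 by auto. rewrite <- Phi_period by auto.
        apply Phi_incr; auto; lra. }
      pose proof (sin_lt1 _ (conj Hx1 Hx2)). intros Heq. nra.
  - intros E HE. exists (II E). apply subst_gen; auto.
  - intros E1 E2 HE. rewrite !Tper_eq by lra. pose proof (II_decr E1 E2 HE).
    pose proof sqrt3_pos. apply Rmult_lt_compat_l; auto. apply Rdiv_lt_0_compat; lra.
  - apply Tper_lim.
Qed.
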